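(* Let $Q,M,B\in\mathbb{R}^{n\times n}$ be symmetric positive semidefinite, set $M_B=BMB$, and assume $\operatorname{Im}\{M_B\}\subseteq\operatorname{Im}\{Q\}$. Define $$\Omega=\{\Pi\in\mathbb{R}^{n\times n}: Q-\Pi M^\dagger\Pi^\top\succeq0,\ \Pi^\top=MM^\dagger\Pi^\top\},$$ $$\mathcal{S}=\{(S,S^-): S\succeq0,\ S^-\succeq0,\ SS^-S=S,\ S^-SS^-=S^-,\ BM=SS^-BM\}.$$ Then $$\min_{(S,S^-)\in\mathcal{S}}\big\{\operatorname{tr}(QS)+\operatorname{tr}(M\,BS^-B)\big\}=\max_{\Pi\in\Omega}\operatorname{tr}\{2\Pi B\}=2\operatorname{tr}\Big\{\big(M_B^{1/2}QM_B^{1/2}\big)^{1/2}\Big\}.$$ The extreme values are attained at $S^*=M_B^{1/2}\big((M_B^{1/2}QM_B^{1/2})^{1/2}\big)^\dagger M_B^{1/2}$, $S^{-*}=(M_B^{1/2})^\dagger(M_B^{1/2}QM_B^{1/2})^{1/2}(M_B^{1/2})^\dagger$, and $\Pi^*=QS^*M_B^\dagger BM=QM_B^{1/2}\big((M_B^{1/2}QM_B^{1/2})^{1/2}\big)^\dagger(M_B^{1/2})^\dagger BM$; the optimal $\Pi^*$ is in general not unique.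
   Context: $\dagger$ denotes the Moore–Penrose pseudoinverse, $\operatorname{Im}$ the column space, and $X^{1/2}$ the PSD square root of a PSD matrix $X$. *)

(* Defs.v *)
From HB Require Import structures.
From mathcomp Require Import all_boot all_order all_algebra.
From mathcomp Require Import boolp classical_sets reals.
Set Implicit Arguments. Unset Strict Implicit. Unset Printing Implicit Defensive.
Import Order.TTheory GRing.Theory Num.Theory.
Local Open Scope ring_scope.

Definition psd {R : realType} {n : nat} (A : 'M[R]_n) : Prop :=
  A^T = A /\ forall x : 'cV[R]_n, 0 <= (x^T *m A *m x) 0 0.

Definition penrose {R : realType} {m n : nat} (A : 'M[R]_(m, n)) (X : 'M[R]_(n, m)) : Prop :=
  [/\ A *m X *m A = A, X *m A *m X = X, (A *m X)^T = A *m X & (X *m A)^T = X *m A].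

Definition pinv {R : realType} {m n : nat} (A : 'M[R]_(m, n)) : 'M[R]_(n, m) :=
  xget 0 (fun X => penrose A X).

Definition psd_sqrt {R : realType} {n : nat} (A : 'M[R]_n) : 'M[R]_n :=
  xget 0 (fun X => psd X /\ X *m X = A).

(* Column-space inclusion Im{A} ⊆ Im{B} (mxalgebra works with row spaces). *)
Definition colspace_sub {R : realType} {m n p : nat}
  (A : 'M[R]_(m, n)) (B : 'M[R]_(m, p)) : bool := (A^T <= B^T)%MS.

Definition Omega {R : realType} {n : nat} (Q M : 'M[R]_n) (Pi : 'M[R]_n) : Prop :=
  psd (Q - Pi *m pinv M *m Pi^T) /\ Pi^T = M *m pinv M *m Pi^T.

Definition Sset {R : realType} {n : nat} (B M : 'M[R]_n) (S Sm : 'M[R]_n) : Prop :=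
  [/\ psd S, psd Sm, S *m Sm *m S = S, Sm *m S *m Sm = Sm & B *m M = S *m Sm *m B *m M].

Definition primal_obj {R : realType} {n : nat} (Q M B : 'M[R]_n) (S Sm : 'M[R]_n) : R :=
  \tr (Q *m S) + \tr (M *m (B *m Sm *m B)).

Definition dual_obj {R : realType} {n : nat} (B : 'M[R]_n) (Pi : 'M[R]_n) : R :=
  \tr (2%:R *: (Pi *m B)).

(* Main.v *)
Require Import Defs.
From HB Require Import structures.
From mathcomp Require Import all_boot all_order all_algebra.
From mathcomp Require Import boolp classical_sets reals.
From mathcomp Require Import complex.
From mathcomp Require Import lra ring.
Set Implicit Arguments. Unset Strict Implicit. Unset Printing Implicit Defensive.
Import Order.TTheory GRing.Theory Num.Theory.
Local Open Scope ring_scope.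

Section S.
Variable R : realType.
Local Notation cRe := (@complex.Re R).
Local Notation cIm := (@complex.Im R).

Lemma ReD (x y : R[i]) : cRe (x + y) = cRe x + cRe y. Proof. by case: x => ? ?; case: y => ? ?. Qed.
Lemma ImD (x y : R[i]) : cIm (x + y) = cIm x + cIm y. Proof. by case: x; case: y. Qed.
Lemma ReMC (x : R[i]) k : cRe (x * (k%:C)%C) = cRe x * k.
Proof. by case: x => a b /=; rewrite mulr0 subr0. Qed.
Lemma ImMC (x : R[i]) k : cIm (x * (k%:C)%C) = cIm x * k.
Proof. by case: x => a b /=; rewrite mulr0 add0r. Qed.
Lemma ReM (x y : R[i]) : cRe (x * y) = cRe x * cRe y - cIm x * cIm y.
Proof. by case: x; case: y. Qed.
Lemma ImM (x y : R[i]) : cIm (x * y) = cRe x * cIm y + cIm x * cRe y.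
Proof. by case: x; case: y => /= *; rewrite addrC. Qed.

Lemma Re_sum I (r : seq I) (P : pred I) (F : I -> R[i]) :
  cRe (\sum_(i <- r | P i) F i) = \sum_(i <- r | P i) cRe (F i).
Proof. by apply: (big_morph cRe) => //; exact: ReD. Qed.
Lemma Im_sum I (r : seq I) (P : pred I) (F : I -> R[i]) :
  cIm (\sum_(i <- r | P i) F i) = \sum_(i <- r | P i) cIm (F i).
Proof. by apply: (big_morph cIm) => //; exact: ImD. Qed.

Lemma sqsum0 n (a : 'rV[R]_n) : (a *m a^T) 0 0 = 0 -> a = 0.
Proof.
rewrite !mxE => /eqP; rewrite psumr_eq0; last by move=> i _; rewrite !mxE -expr2 sqr_ge0.
move=> /allP H; apply/rowP => i; rewrite mxE.
have := H i (mem_index_enum _); rewrite mxE -expr2 sqrf_eq0 /= => /eqP.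
done.
Qed.

Lemma real_eig n (A : 'M[R]_n) (z : R[i]) : A^T = A ->
  eigenvalue (map_mx (real_complex R) A) z -> cIm z = 0.
Proof.
move=> sA /eigenvalueP [v Hv vN0].
pose a := map_mx cRe v; pose b := map_mx cIm v.
have Ha : a *m A = cRe z *: a - cIm z *: b.
  apply/rowP => j; move/rowP: Hv => /(_ j); rewrite !mxE => /(congr1 cRe).
  rewrite Re_sum ReM => <-; apply: eq_bigr => i _; rewrite !mxE ReMC.
  done.
have Hb : b *m A = cIm z *: a + cRe z *: b.
  apply/rowP => j; move/rowP: Hv => /(_ j); rewrite !mxE => /(congr1 cIm).
  rewrite Im_sum ImM addrC => <-; apply: eq_bigr => i _; rewrite !mxE ImMC.
  done.
have E : (a *m A *m b^T) 0 0 = (b *m A *m a^T) 0 0.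
  have -> : b *m A *m a^T = (a *m A *m b^T)^T by rewrite !trmx_mul trmxK sA mulmxA.
  by rewrite [RHS]mxE.
have Eab : (a *m b^T) 0 0 = (b *m a^T) 0 0.
  have -> : b *m a^T = (a *m b^T)^T by rewrite trmx_mul trmxK.
  by rewrite [RHS]mxE.
move: E; rewrite Ha Hb !mulmxDl mulNmx -!scalemxAl.
move: Eab; set ab := a *m b^T; set ba := b *m a^T; set aa := a *m a^T; set bb := b *m b^T.
rewrite !mxE => Eab; rewrite Eab => E.
have H0 : cIm z * ((aa) 0 0 + (bb) 0 0) = 0.
  rewrite !mxE mulrDr; lra.
apply/eqP; apply: contraNT vN0 => Hz.
move/eqP: H0; rewrite mulf_eq0 (negbTE Hz) /= => H0.
have Haa : 0 <= aa 0 0.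
  by rewrite mxE; apply: sumr_ge0 => i _; rewrite !mxE -expr2 sqr_ge0.
have Hbb : 0 <= bb 0 0.
  by rewrite mxE; apply: sumr_ge0 => i _; rewrite !mxE -expr2 sqr_ge0.
have a0 : a = 0 by apply: sqsum0; rewrite -/aa; move/eqP: H0; lra.
have b0 : b = 0 by apply: sqsum0; rewrite -/bb; move/eqP: H0; lra.
apply/eqP/rowP => j; rewrite mxE.
move/rowP: a0 => /(_ j); move/rowP: b0 => /(_ j); rewrite !mxE.
by case: (v 0 j) => x y /= -> ->.
Qed.

Lemma sym_split n (A : 'M[R]_n) : A^T = A ->
  exists rl : seq R, char_poly A = \prod_(x <- rl) ('X - x%:P).
Proof.
move=> sA.
pose f := real_complex R.
have [rs Hrs] := closed_field_poly_normal (char_poly (map_mx f A)).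
move: Hrs; rewrite (monicP (char_poly_monic _)) scale1r => Hrs.
have Hre : forall z, z \in rs -> z = ((cRe z)%:C)%C.
  move=> z zin.
  have : root (char_poly (map_mx f A)) z by rewrite Hrs root_prod_XsubC.
  rewrite -eigenvalue_root_char => /(real_eig sA).
  by case: z {zin} => x y /= ->.
exists (map cRe rs).
apply: (@map_poly_inj _ _ f); rewrite map_char_poly Hrs rmorph_prod /=.
rewrite big_map; apply: eq_big_seq => z zin.
by rewrite map_polyXsubC /= -Hre.
Qed.

Lemma gram0 m n (X : 'M[R]_(m, n)) : X^T *m X = 0 -> X = 0.
Proof.
move=> H; apply/matrixP => i j; rewrite mxE.
move/matrixP: H => /(_ j j); rewrite !mxE => /eqP.
rewrite psumr_eq0; last by move=> k _; rewrite mxE -expr2 sqr_ge0.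
move=> /allP /(_ i (mem_index_enum _)); rewrite mxE -expr2 sqrf_eq0 /=.
by move/eqP.
Qed.

Lemma trmxX n (T : 'M[R]_n.+1) k : (T ^+ k)^T = (T^T) ^+ k.
Proof.
elim: k => [|k IH]; first by rewrite !expr0 trmx1.
by rewrite exprS -mulmxE trmx_mul IH exprSr mulmxE.
Qed.

Lemma symnil n (T : 'M[R]_n.+1) k : T^T = T -> T ^+ k = 0 -> T = 0.
Proof.
move=> sT; have [K] := ubnP k; elim: K k => [//|K IH] k.
case: k => [|[|k]] Hk.
- by move/eqP; rewrite expr0 oner_eq0.
- by rewrite expr1.
move=> Tk; apply: (IH k.+1) => //.
apply: gram0; rewrite trmxX sT mulmxE -exprD.
have -> : (k.+1 + k.+1 = k + k.+2)%N by rewrite addSnnS.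
by rewrite exprD Tk mulr0.
Qed.

Lemma horner_sym n (A : 'M[R]_n.+1) p : A^T = A -> (horner_mx A p)^T = horner_mx A p.
Proof.
move=> sA; elim/poly_ind: p => [|p c IH]; first by rewrite rmorph0 trmx0.
rewrite rmorphD rmorphM /= horner_mx_C horner_mx_X linearD /= tr_scalar_mx.
congr (_ + _); rewrite -mulmxE trmx_mul IH sA.
by rewrite -[A in A *m _]horner_mx_X mulmxE -rmorphM /= mulrC rmorphM /= horner_mx_X.
Qed.

Lemma prod_dvd (l l' : seq R) : {subset l <= l'} ->
  \prod_(x <- l) ('X - x%:P) %| (\prod_(x <- undup l') ('X - x%:P)) ^+ size l.
Proof.
elim: l => [|x l IH] sub; first by rewrite big_nil dvd1p.
rewrite big_cons /= exprS; apply: dvdp_mul.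
  rewrite dvdp_XsubCl root_prod_XsubC mem_undup; apply: sub; exact: mem_head.
by apply: IH => y yin; apply: sub; rewrite inE yin orbT.
Qed.

Lemma sym_key n (A : 'M[R]_n.+1) : A^T = A ->
  exists ev : seq R, [/\ uniq ev,
    horner_mx A (\prod_(x <- ev) ('X - x%:P)) = 0 &
    forall x, x \in ev -> exists2 v : 'rV_n.+1, v *m A = x *: v & v != 0].
Proof.
move=> sA; have [rl Hrl] := sym_split sA.
exists (undup rl); split; first exact: undup_uniq.
  apply: (@symnil _ _ (size rl)); first exact: horner_sym.
  have /dvdpP [q Hq] := @prod_dvd rl rl (fun x h => h).
  by rewrite -rmorphXn /= Hq rmorphM /= -Hrl Cayley_Hamilton mulr0.
move=> x; rewrite mem_undup => xin; apply/eigenvalueP.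
by rewrite eigenvalue_root_char Hrl root_prod_XsubC.
Qed.

Lemma interp (ev : seq R) (f : R -> R) : uniq ev ->
  exists p : {poly R}, forall x, x \in ev -> p.[x] = f x.
Proof.
elim: ev => [|x l IH] /=; first by move=> _; exists 0.
case/andP => xl ul; have [p Hp] := IH ul.
pose w := \prod_(y <- l) ('X - y%:P).
have wx : w.[x] != 0 by rewrite -/(root w x) root_prod_XsubC.
exists (p + ((f x - p.[x]) / w.[x]) *: w) => y; rewrite inE => /orP [/eqP ->|yl].
  by rewrite hornerD hornerZ divfK // addrC subrK.
have /rootP wy : root w y by rewrite root_prod_XsubC.
by rewrite hornerD hornerZ -/w wy mulr0 addr0 Hp.
Qed.

Lemma calc_zero n (A : 'M[R]_n.+1) (ev : seq R) q : uniq ev ->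
  horner_mx A (\prod_(x <- ev) ('X - x%:P)) = 0 ->
  (forall x, x \in ev -> q.[x] = 0) -> horner_mx A q = 0.
Proof.
move=> uev H0 Hq.
have [r ->] : exists r, q = r * \prod_(z <- ev) ('X - z%:P).
  apply: uniq_roots_prod_XsubC; last by rewrite uniq_rootsE.
  by apply/allP => x /Hq /rootP.
by rewrite rmorphM /= H0 mulr0.
Qed.

Lemma gram_ge0 m n (Z : 'M[R]_(m, n)) (y : 'cV[R]_n) :
  0 <= (y^T *m (Z^T *m Z) *m y) 0 0.
Proof.
rewrite mulmxA -trmx_mul -mulmxA mxE; apply: sumr_ge0 => i _.
by rewrite mxE -expr2 sqr_ge0.
Qed.

Lemma calc_psd n (A : 'M[R]_n.+1) (ev : seq R) q : A^T = A -> uniq ev ->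
  horner_mx A (\prod_(x <- ev) ('X - x%:P)) = 0 ->
  (forall x, x \in ev -> 0 <= q.[x]) -> psd (horner_mx A q).
Proof.
move=> sA uev H0 Hq; split; first exact: horner_sym.
have [r Hr] := interp (fun x => Num.sqrt q.[x]) uev.
have -> : horner_mx A q = (horner_mx A r)^T *m horner_mx A r.
  apply/eqP; rewrite horner_sym // mulmxE -rmorphM -subr_eq0 -rmorphB /=.
  apply/eqP; apply: (calc_zero uev H0) => x xin.
  by rewrite hornerD hornerN hornerM Hr // -expr2 sqr_sqrtr ?Hq // subrr.
move=> y; exact: gram_ge0.
Qed.

Lemma eig_ge0 n (A : 'M[R]_n) (x : R) (v : 'rV[R]_n) : psd A ->
  v *m A = x *: v -> v != 0 -> 0 <= x.
Proof.
move=> [sA pA] Hv vN0; have := pA v^T; rewrite trmxK Hv -scalemxAl mxE.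
have vpos : 0 < (v *m v^T) 0 0.
  rewrite lt_def; apply/andP; split.
    by apply/negP => /eqP /sqsum0 v0; rewrite v0 eqxx in vN0.
  by rewrite mxE; apply: sumr_ge0 => i _; rewrite mxE -expr2 sqr_ge0.
by rewrite pmulr_lge0.
Qed.

Lemma sqrt_ex n (A : 'M[R]_n) : psd A -> exists X, psd X /\ X *m X = A.
Proof.
case: n A => [|n] A pA.
  exists 0; split; last by apply/matrixP => [[]].
  by split; [rewrite trmx0 | move=> x; rewrite mulmx0 mul0mx mxE].
have [ev [uev H0 Hev]] := sym_key pA.1.
have evp : forall x, x \in ev -> 0 <= x.
  by move=> x /Hev [v Hv vN0]; exact: eig_ge0 pA Hv vN0.
have [p Hp] := interp Num.sqrt uev.
exists (horner_mx A p); split.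
  apply: (calc_psd pA.1 uev H0) => x xin; rewrite Hp //; exact: sqrtr_ge0.
apply/eqP; rewrite mulmxE -rmorphM -subr_eq0 -[X in _ - X]horner_mx_X -rmorphB /=.
apply/eqP; apply: (calc_zero uev H0) => x xin.
by rewrite hornerD hornerN hornerM hornerX Hp // -expr2 sqr_sqrtr ?evp // subrr.
Qed.

Lemma pinv_ex n (A : 'M[R]_n) : A^T = A -> exists X, penrose A X.
Proof.
case: n A => [|n] A sA.
  by exists 0; split; apply/matrixP => [[]].
have [ev [uev H0 Hev]] := sym_key sA.
have [p Hp] := interp GRing.inv uev.
have HX : horner_mx A 'X = A := horner_mx_X _.
set X := horner_mx A p.
have E1 : A *m X *m A - A = horner_mx A ('X * p * 'X - 'X).
  by rewrite rmorphB !rmorphM /= HX.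
have E2 : X *m A *m X - X = horner_mx A (p * 'X * p - p).
  by rewrite rmorphB !rmorphM /= HX.
have E3 : A *m X = horner_mx A ('X * p) by rewrite rmorphM /= HX.
have E4 : X *m A = horner_mx A (p * 'X) by rewrite rmorphM /= HX.
exists X; split.
- apply/eqP; rewrite -subr_eq0 E1; apply/eqP.
  apply: (calc_zero uev H0) => x xin.
  rewrite hornerD hornerN !hornerM hornerX Hp //.
  by have [->|x0] := eqVneq x 0; rewrite ?mulr0 ?subrr // mulfV // mul1r subrr.
- apply/eqP; rewrite -subr_eq0 E2; apply/eqP.
  apply: (calc_zero uev H0) => x xin.
  rewrite hornerD hornerN !hornerM hornerX Hp //.
  by have [->|x0] := eqVneq x 0; rewrite ?invr0 ?mulr0 ?mul0r ?subrr // mulVf // mul1r subrr.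
- by rewrite E3 horner_sym.
- by rewrite E4 horner_sym.
Qed.

Lemma pinvP n (A : 'M[R]_n) : A^T = A -> penrose A (pinv A).
Proof. by move=> sA; have [X HX] := pinv_ex sA; exact: (xgetI 0 HX). Qed.

Lemma sqrtP n (A : 'M[R]_n) : psd A ->
  psd (psd_sqrt A) /\ psd_sqrt A *m psd_sqrt A = A.
Proof.
move=> pA; have [X HX] := sqrt_ex pA.
exact: (xgetI 0 (P := fun X => psd X /\ X *m X = A) HX).
Qed.

Lemma penrose_uniq m n (A : 'M[R]_(m, n)) X Y :
  penrose A X -> penrose A Y -> X = Y.
Proof.
move=> [X1 X2 X3 X4] [Y1 Y2 Y3 Y4].
have AXY : A *m X = A *m Y.
  have E : A^T = A^T *m (A *m Y) by rewrite -{1}Y1 trmx_mul Y3.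
  by rewrite -X3 trmx_mul E (mulmxA X^T) -trmx_mul X3 mulmxA X1.
have XAY : X *m A = Y *m A.
  have E : A^T = Y *m A *m A^T by rewrite -{1}Y1 -mulmxA trmx_mul Y4.
  rewrite -X4 trmx_mul E -!mulmxA -trmx_mul X4 !mulmxA.
  by rewrite -(mulmxA (Y *m A)) -(mulmxA Y) (mulmxA A) X1.
by rewrite -X2 -Y2 -mulmxA AXY mulmxA XAY.
Qed.

Lemma pinv_sym n (A : 'M[R]_n) : A^T = A -> (pinv A)^T = pinv A.
Proof.
move=> sA; have [P1 P2 P3 P4] := pinvP sA.
apply: (penrose_uniq (A := A)); last exact: pinvP.
split.
- by rewrite -{1 3}sA -!trmx_mul mulmxA P1.
- by rewrite -{2}sA -!trmx_mul mulmxA P2.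
- by rewrite -{1}sA -trmx_mul P4 trmx_mul sA.
- by rewrite -{2}sA -trmx_mul P3 trmx_mul sA.
Qed.

Lemma pinv_comm n (A : 'M[R]_n) : A^T = A -> A *m pinv A = pinv A *m A.
Proof.
move=> sA; have [_ _ P3 _] := pinvP sA.
by rewrite -P3 trmx_mul pinv_sym // sA.
Qed.

Lemma psd_congr n (A X : 'M[R]_n) : psd A -> psd (X^T *m A *m X).
Proof.
move=> [sA pA]; split; first by rewrite !trmx_mul trmxK sA mulmxA.
move=> x; have := pA (X *m x); rewrite trmx_mul !mulmxA.
done.
Qed.

Lemma psd_pinv n (A : 'M[R]_n) : psd A -> psd (pinv A).
Proof.
move=> pA; have [_ P2 _ _] := pinvP pA.1.
by rewrite -P2 -{1}(pinv_sym pA.1); exact: psd_congr.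
Qed.

Lemma tr_ge0 n (A : 'M[R]_n) : psd A -> 0 <= \tr A.
Proof.
move=> [_ pA]; rewrite /mxtrace; apply: sumr_ge0 => i _.
have := pA (delta_mx i 0).
suff -> : (delta_mx i 0)^T *m A *m delta_mx i 0 = (A i i)%:M :> 'M_1.
  by rewrite mxE.
rewrite trmx_delta -rowE -colE; apply/matrixP => a b.
by rewrite !ord1 !mxE eqxx mulr1n.
Qed.

Lemma trmxC n (A B : 'M[R]_n) : \tr (A *m B) = \tr (B *m A).
Proof. exact: mxtrace_mulC. Qed.

Lemma tr_prod_ge0 n (Y S : 'M[R]_n) : psd Y -> psd S -> 0 <= \tr (Y *m S).
Proof.
move=> pY pS; have [[sS' _] E] := sqrtP pS.
rewrite -E mulmxA trmxC mulmxA -{1}sS'; apply: tr_ge0; exact: psd_congr.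
Qed.

Lemma psdQ0 n (Q X : 'M[R]_n) : psd Q -> X^T *m Q *m X = 0 -> Q *m X = 0.
Proof.
move=> pQ H; have [[sN _] E] := sqrtP pQ.
have : (psd_sqrt Q *m X)^T *m (psd_sqrt Q *m X) = 0.
  by rewrite trmx_mul sN -mulmxA (mulmxA (psd_sqrt Q)) E mulmxA.
by move/gram0 => H0; rewrite -E -mulmxA H0 mulmx0.
Qed.

Lemma projR m n (P : 'M[R]_m) (C : 'M[R]_(m, n)) :
  P^T = P -> P *m (C *m C^T) = C *m C^T -> P *m C = C.
Proof.
move=> sP H.
have H' : C *m C^T *m P = C *m C^T.
  by have := congr1 trmx H; rewrite !trmx_mul trmxK sP.
have : (C - P *m C)^T = 0.
  apply: gram0; rewrite trmxK linearB /= trmx_mul sP mulmxBl !mulmxBr.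
  by rewrite !mulmxA H' -(mulmxA P) H H' !subrr.
move/(congr1 trmx); rewrite trmxK trmx0 => /eqP; rewrite subr_eq0 => /eqP.
by move=> <-.
Qed.
End S.

Section M.
Variable R : realType.
Implicit Types n : nat.

Lemma ctx2 n (a b d : 'M[R]_n) : a *m b = d -> forall Z : 'M[R]_n, Z *m a *m b = Z *m d.
Proof. by move=> E Z; rewrite -mulmxA E. Qed.
Lemma ctx3 n (a b c d : 'M[R]_n) : a *m b *m c = d -> forall Z : 'M[R]_n, Z *m a *m b *m c = Z *m d.
Proof. by move=> E Z; rewrite -!mulmxA (mulmxA a) E. Qed.

Lemma ctx4 n (a b c e d : 'M[R]_n) : a *m b *m c *m e = d ->
  forall Z : 'M[R]_n, Z *m a *m b *m c *m e = Z *m d.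
Proof. by move=> E Z; rewrite -!mulmxA (mulmxA a) (mulmxA (a *m b)) E. Qed.

Lemma weak_dual n (Q M B S Sm Pi : 'M[R]_n) : psd Q -> psd M -> psd B ->
  Sset B M S Sm -> Omega Q M Pi -> dual_obj B Pi <= primal_obj Q M B S Sm.
Proof.
move=> pQ pM pB [pS pSm SSS SmSSm BMS] [pO PiM].
have sB := pB.1; have sM := pM.1; have sS := pS.1; have sSm := pSm.1.
set Mp := pinv M.
have pMp : psd Mp := psd_pinv pM.
have [M1 M2 M3 M4] := pinvP sM.
have sMp : Mp^T = Mp := pinv_sym sM.
have PiM' : Pi = Pi *m Mp *m M.
  by rewrite -[LHS]trmxK PiM !trmx_mul sMp sM trmxK mulmxA.
have MBS : M *m B *m Sm *m S = M *m B.
  have := congr1 trmx BMS; rewrite !trmx_mul sB sM sS sSm !mulmxA => <-.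
  done.
have H1 : 0 <= \tr ((Q - Pi *m Mp *m Pi^T) *m S) := tr_prod_ge0 pO pS.
set D := Pi - Sm *m B *m M.
have pD : psd (D *m Mp *m D^T).
  by have := psd_congr D^T pMp; rewrite trmxK.
have H2 : 0 <= \tr (D *m Mp *m D^T *m S) := tr_prod_ge0 pD pS.
have T2 : \tr (Pi *m Mp *m (Sm *m B *m M)^T *m S) = \tr (Pi *m B).
  rewrite !trmx_mul sSm sB sM !mulmxA.
  by rewrite (ctx4 MBS) mulmxA -PiM'.
have T3 : \tr (Sm *m B *m M *m Mp *m Pi^T *m S) = \tr (Pi *m B).
  rewrite mxtrace_mulC !mulmxA.
  rewrite -[S *m Sm *m B *m M]BMS -!mulmxA (mulmxA M) -PiM.
  by rewrite -mxtrace_tr trmx_mul sB trmxK.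
have T4 : \tr (Sm *m B *m M *m Mp *m (Sm *m B *m M)^T *m S) =
          \tr (M *m (B *m Sm *m B)).
  rewrite !trmx_mul sSm sB sM !mulmxA (ctx3 M1).
  rewrite -(mulmxA (Sm *m B *m M *m B) Sm S) mxtrace_mulC !mulmxA SmSSm.
  by rewrite -[Sm *m B *m M *m B]mulmxA -[Sm *m B *m (M *m B)]mulmxA mxtrace_mulC [RHS]mxtrace_mulC !mulmxA.
have E : \tr (D *m Mp *m D^T *m S) =
   \tr (Pi *m Mp *m Pi^T *m S) - \tr (Pi *m B) - \tr (Pi *m B)
   + \tr (M *m (B *m Sm *m B)).
  rewrite /D linearB /= !mulmxBl !mulmxBr !mulmxBl !linearD !linearN /= T2 T3 T4; lra.
rewrite /dual_obj /primal_obj mxtraceZ.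
move: H1; rewrite mulmxBl linearB /= => H1.
move: H2; rewrite E => H2.
rewrite -mulr_natl; lra.
Qed.

Lemma projQ n (P X Q : 'M[R]_n) : psd Q -> P^T = P ->
  P *m (X *m Q *m X^T) = X *m Q *m X^T -> P *m X *m Q = X *m Q.
Proof.
move=> pQ sP H; have [[sN _] sqN] := sqrtP pQ.
have E : X *m Q *m X^T = (X *m psd_sqrt Q) *m (X *m psd_sqrt Q)^T.
  by rewrite trmx_mul sN !mulmxA -[in LHS]sqN !mulmxA.
have H' : P *m (X *m psd_sqrt Q) = X *m psd_sqrt Q by apply: projR sP _; rewrite -E.
by rewrite -sqN !mulmxA -(mulmxA P) H'.
Qed.

Lemma psd_gram n (Z : 'M[R]_n) : psd (Z^T *m Z).
Proof. by split; [rewrite trmx_mul trmxK | move=> y; exact: gram_ge0]. Qed.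

Lemma pinv_sq n (K : 'M[R]_n) : K^T = K -> pinv (K *m K) = pinv K *m pinv K.
Proof.
move=> sK; have [K1 K2 K3 K4] := pinvP sK; have KKp := pinv_comm sK.
set Kp := pinv K in K1 K2 K3 K4 KKp *.
have KKKp : K *m K *m Kp = K by rewrite -mulmxA KKp mulmxA K1.
have KpKpK : Kp *m Kp *m K = Kp by rewrite -mulmxA -KKp mulmxA K2.
have sKK : (K *m K)^T = K *m K by rewrite trmx_mul sK.
apply: (penrose_uniq (pinvP sKK)); split.
- by rewrite !mulmxA KKKp K1.
- by rewrite !mulmxA KpKpK K2.
- by rewrite mulmxA KKKp K3.
- by rewrite mulmxA KpKpK K4.
Qed.

Lemma part1 (n : nat) (Q M B : 'M[R]_n) :
    psd Q -> psd M -> psd B ->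
    colspace_sub (B *m M *m B) Q ->
    let MB := B *m M *m B in
    let MBh := psd_sqrt MB in
    let C := psd_sqrt (MBh *m Q *m MBh) in
    let v := 2%:R * \tr C in
    let Sst := MBh *m pinv C *m MBh in
    let Smst := pinv MBh *m C *m pinv MBh in
    let Pist := Q *m Sst *m pinv MB *m B *m M in
    [/\ Sset B M Sst Smst, primal_obj Q M B Sst Smst = v
      & forall S Sm, Sset B M S Sm -> v <= primal_obj Q M B S Sm]
    /\
    [/\ Pist = Q *m MBh *m pinv C *m pinv MBh *m B *m M,
        Omega Q M Pist, dual_obj B Pist = v
      & forall Pi, Omega Q M Pi -> dual_obj B Pi <= v].
Proof.
move=> pQ pM pB hcol MB K C v S Sm Pi.
have sQ := pQ.1; have sM := pM.1; have sB := pB.1.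
have pMB : psd MB by have := psd_congr B pM; rewrite sB.
have [pK sqK] : psd K /\ K *m K = MB := sqrtP pMB.
have sqK' : K *m K = B *m M *m B := sqK.
have sK := pK.1.
have pG : psd (K *m Q *m K) by have := psd_congr K pQ; rewrite sK.
have [pC sqC] : psd C /\ C *m C = K *m Q *m K := sqrtP pG.
have sC := pC.1.
have [K1 K2 K3 K4] := pinvP sK; have [C1 C2 C3 C4] := pinvP sC.
have sKp := pinv_sym sK; have sCp := pinv_sym sC.
have KKp := pinv_comm sK; have CCp := pinv_comm sC.
have [M1 M2 M3 M4] := pinvP sM.
set Kp := pinv K in K1 K2 K3 K4 sKp KKp S Sm Pi *.
set Cp := pinv C in C1 C2 C3 C4 sCp CCp S Sm Pi *.
have F3 : K *m Kp *m C = C.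
  by apply: projR K3 _; rewrite sC sqC !mulmxA K1.
have F3' : K *m Kp *m Cp = Cp.
  have E : C *m Cp *m Cp = Cp by rewrite CCp C2.
  by rewrite -{1}E !mulmxA F3 E.
have F4 : Cp *m Kp *m K = Cp.
  have := congr1 trmx F3'; rewrite !trmx_mul sCp sKp sK.
  by rewrite mulmxA.
have F2 : C *m Cp *m K = K.
  have PKQ : C *m Cp *m K *m Q = K *m Q.
    by apply: projQ pQ C3 _; rewrite sK -sqC !mulmxA C1.
  have [D HD] := submxP hcol.
  have KKDQ : K *m K = Q *m D^T.
    by rewrite sqK' -[LHS]trmxK HD trmx_mul trmxK.
  have KQZ : K = Q *m (D^T *m Kp).
    by rewrite -{1}K1 -mulmxA -KKp mulmxA KKDQ mulmxA.
  have KKQ : K *m K = K *m Q *m (D^T *m Kp) by rewrite {2}KQZ mulmxA.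
  by apply: projR C3 _; rewrite sK KKQ !mulmxA PKQ.
have F2' : K *m Cp *m C = K.
  by have := congr1 trmx F2; rewrite !trmx_mul sK sCp sC mulmxA.
have SSm : S *m Sm = K *m Kp by rewrite /S /Sm !mulmxA (ctx3 F3) F2'.
have KKpBM : K *m Kp *m B *m M = B *m M.
  by apply: projQ pM K3 _; rewrite sB -sqK' !mulmxA K1.
have HS : Sset B M S Sm.
  split.
  - by have := psd_congr K (psd_pinv pC); rewrite sK.
  - by have := psd_congr Kp pC; rewrite sKp.
  - by rewrite SSm /S !mulmxA K1.
  - by rewrite -mulmxA SSm /Sm !mulmxA (ctx3 K2).
  - by rewrite SSm KKpBM.
have T1 : \tr (Q *m K *m Cp *m K) = \tr C.
  rewrite mxtrace_mulC !mulmxA -sqC -mulmxA CCp mulmxA C1 //.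
have Pv : primal_obj Q M B S Sm = v.
  rewrite /primal_obj /v /S /Sm !mulmxA T1.
  rewrite mxtrace_mulC !mulmxA -sqK'.
  rewrite -(mulmxA K K Kp) KKp mulmxA K1.
  rewrite mxtrace_mulC !mulmxA -KKp F3.
  by rewrite mulr_natl mulr2n.
have PiE : Pi = Q *m K *m Cp *m Kp *m B *m M.
  rewrite /Pi /S -sqK pinv_sq // -/Kp !mulmxA.
  have E : K *m Kp *m Kp = Kp by rewrite KKp K2.
  by rewrite (ctx3 E).
have [W [PiW WK]] : exists W, Pi = W *m B *m M /\ W *m K = Q *m K *m Cp.
  by exists (Q *m K *m Cp *m Kp); split; [rewrite PiE | rewrite (ctx3 F4)].
have KWt : K *m W^T = Cp *m K *m Q.
  by have := congr1 trmx WK; rewrite !trmx_mul sCp sK sQ mulmxA.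
have Dv : dual_obj B Pi = v.
  rewrite /dual_obj mxtraceZ PiW -!mulmxA (mulmxA B M B) -sqK' mulmxA WK T1.
  by rewrite /v mulr_natl.
have HO : Omega Q M Pi.
  split; last by rewrite PiW trmx_mul sM mulmxA M1.
  have PMP : Pi *m pinv M *m Pi^T = Q *m K *m Cp *m Cp *m K *m Q.
    rewrite PiW !trmx_mul sM sB !mulmxA (ctx3 M1).
    rewrite (ctx3 (esym sqK')) mulmxA WK.
    by rewrite -mulmxA KWt !mulmxA.
  rewrite PMP.
  have [[sN _] sqN] := sqrtP pQ.
  set N := psd_sqrt Q in sN sqN *.
  set T := N *m K *m Cp *m Cp *m K *m N.
  have sT : T^T = T by rewrite /T !trmx_mul sN sK sCp !mulmxA.
  have CpCpC : Cp *m Cp *m C = Cp by rewrite -mulmxA -CCp mulmxA C2.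
  have TT : T *m T = T.
    rewrite /T !mulmxA (ctx2 sqN) (ctx3 (esym sqC)) !mulmxA.
    by rewrite (ctx3 CpCpC) (ctx3 C2).
  have := psd_gram ((1%:M - T) *m N).
  congr psd; rewrite trmx_mul linearB /= trmx1 sT sN.
  rewrite mulmxA -(mulmxA N (1%:M - T) (1%:M - T)).
  have -> : (1%:M - T) *m (1%:M - T) = 1%:M - T.
    by rewrite mulmxBr mulmx1 mulmxBl mul1mx TT subrr subr0.
  rewrite mulmxBr mulmx1 mulmxBl sqN /T !mulmxA sqN.
  by rewrite (ctx2 sqN).
split; split => //.
- move=> S0 Sm0 H0; rewrite -Dv; exact: weak_dual.
- move=> Pi0 H0; rewrite -Pv; exact: weak_dual.
Qed.

Lemma part2 : exists (n : nat) (Q M B : 'M[R]_n),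
    [/\ psd Q, psd M, psd B & colspace_sub (B *m M *m B) Q] /\
    exists P1 P2 : 'M[R]_n,
      [/\ P1 <> P2, Omega Q M P1, Omega Q M P2,
          dual_obj B P1 = dual_obj B P2
        & forall Pi, Omega Q M Pi -> dual_obj B Pi <= dual_obj B P1].
Proof.
have psd1 : psd (1%:M : 'M[R]_1) by have := psd_gram (1%:M : 'M[R]_1); rewrite trmx1 mulmx1.
have psd0 : psd (0 : 'M[R]_1) by have := psd_gram (0 : 'M[R]_1); rewrite mulmx0.
have pinv1 : pinv (1%:M : 'M[R]_1) = 1%:M.
  have s1 : (1%:M : 'M[R]_1)^T = 1%:M by rewrite trmx1.
  apply: (penrose_uniq (pinvP s1)).
  by split; rewrite ?mulmx1 ?trmx1.
have D0 : forall P : 'M[R]_1, dual_obj 0 P = 0.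
  by move=> P; rewrite /dual_obj mulmx0 scaler0 mxtrace0.
exists 1%N, 1%:M, 1%:M, 0; split.
  by split => //; rewrite /colspace_sub !mulmx0 trmx0 sub0mx.
exists 0, 1%:M; split.
- move=> H; have := congr1 (fun A : 'M[R]_1 => A 0 0) H; rewrite !mxE /=.
  by move/eqP; rewrite eq_sym oner_eq0.
- by split; rewrite ?trmx0 ?mulmx0 ?mul0mx ?subr0.
- by split; rewrite pinv1 ?trmx1 !mulmx1 ?subrr.
- by rewrite !D0.
- by move=> Pi _; rewrite !D0.
Qed.
End M.

Theorem theorem6 :
  (forall (R : realType) (n : nat) (Q M B : 'M[R]_n),
    psd Q -> psd M -> psd B ->
    colspace_sub (B *m M *m B) Q ->
    let MB := B *m M *m B in
    let MBh := psd_sqrt MB in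
    let C := psd_sqrt (MBh *m Q *m MBh) in
    let v := 2%:R * \tr C in
    let Sst := MBh *m pinv C *m MBh in
    let Smst := pinv MBh *m C *m pinv MBh in
    let Pist := Q *m Sst *m pinv MB *m B *m M in
    (* minimum over 𝒮, attained at (S*, S^-* ) *)
    [/\ Sset B M Sst Smst, primal_obj Q M B Sst Smst = v
      & forall S Sm, Sset B M S Sm -> v <= primal_obj Q M B S Sm]
    /\
    (* maximum over Ω, attained at Π* *)
    [/\ Pist = Q *m MBh *m pinv C *m pinv MBh *m B *m M,
        Omega Q M Pist, dual_obj B Pist = v
      & forall Pi, Omega Q M Pi -> dual_obj B Pi <= v])
  /\
  (* the optimal Π* is in general not unique *)
  (forall R : realType, exists (n : nat) (Q M B : 'M[R]_n),
    [/\ psd Q, psd M, psd B & colspace_sub (B *m M *m B) Q] /\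
    exists P1 P2 : 'M[R]_n,
      [/\ P1 <> P2, Omega Q M P1, Omega Q M P2,
          dual_obj B P1 = dual_obj B P2
        & forall Pi, Omega Q M Pi -> dual_obj B Pi <= dual_obj B P1]).
Proof.
split.
- move=> R n Q M B pQ pM pB hcol; exact: part1 pQ pM pB hcol.
- move=> R; exact: part2.
Qed.
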